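(* Let $X$ be a $d$-uniform $\{\lambda_i\}$-two-sided local-spectral expander with all $\lambda_i>0$. Then for every $k<d$, the degree of the $k$-skeleton of $X$ satisfies \[\deg^{(k)}(X)\ge\frac{1}{(k-1)!}\prod_{i=1}^{k-1}\frac{1}{\lambda_i}.\]
   Context: $X$ is a $d$-uniform simplicial complex ($X(j)$ its faces of size $j$) with a full-support distribution on $X(d)$; links $X_t=\{s\setminus t:t\subseteq s\in X\}$ carry the induced distribution, and the graph underlying $X_t$ has vertices $X_t(1)$ and weighted edges $X_t(2)$. A weighted graph is a $\lambda$-two-sided expander if all nontrivial eigenvalues of its normalized adjacency operator lie in $[-\lambda,\lambda]$. $X$ is a $\{\lambda_i\}$-two-sided local-spectral expander if for every $i\le d-2$ and every $t\in X(i)$ the graph underlying $X_t$ is a $\lambda_i$-two-sided expander. The $k$-th degree is $\deg^{(k)}(X)=\max_{v\in X(1)}|\{s\in X(k):v\in s\}|$. *)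

(* Defs.v *)
From HB Require Import structures.
From mathcomp Require Import all_boot all_order all_algebra.
From mathcomp Require Import reals.
Set Implicit Arguments. Unset Strict Implicit. Unset Printing Implicit Defensive.
Import Order.TTheory GRing.Theory Num.Theory.
Local Open Scope ring_scope.

Section SimplicialDefs.
Variable V : finType.

Definition is_complex (X : {set {set V}}) : Prop :=
  forall s t : {set V}, s \in X -> t \subset s -> t \in X.

Definition d_uniform (X : {set {set V}}) (d : nat) : Prop :=
  (forall s, s \in X -> (#|s| <= d)%N) /\
  (forall s, s \in X -> exists2 f, f \in X & (s \subset f) && (#|f| == d)).

Variable R : realType.

Definition full_support_distr (X : {set {set V}}) (d : nat) (p : {set V} -> R)
  : Prop :=
  (forall s, s \in X -> #|s| = d -> 0 < p s) /\
  \sum_(s in X | #|s| == d) p s = 1.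

(* total weight of top faces containing s (proportional to the induced
   probability of s) *)
Definition face_weight (X : {set {set V}}) (d : nat) (p : {set V} -> R)
  (s : {set V}) : R :=
  \sum_(f in X | (#|f| == d) && (s \subset f)) p f.

Definition link_verts (X : {set {set V}}) (t : {set V}) : {set V} :=
  [set v | (v \notin t) && ((v |: t) \in X)].

(* edge weight of {u,v} in the graph underlying X_t (up to a constant factor,
   which does not affect the normalized adjacency operator) *)
Definition link_adj (X : {set {set V}}) d p (t : {set V}) (u v : V) : R :=
  if u == v then 0 else face_weight X d p ([set u; v] :|: t).

Definition link_deg (X : {set {set V}}) d p (t : {set V}) (u : V) : R :=
  \sum_(v in link_verts X t) link_adj X d p t u v.

(* normalized adjacency operator D^{-1} A of the graph underlying X_t,
   with rows/columns indexed by an enumeration of X_t(1) *)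
Definition link_walk (X : {set {set V}}) d p (t : {set V}) :
  'M[R]_#|link_verts X t| :=
  \matrix_(i, j) (link_adj X d p t (enum_val i) (enum_val j) /
                  link_deg X d p t (enum_val i)).

End SimplicialDefs.

(* lambda-two-sided expander: the eigenvalues other than (one copy of) the
   trivial eigenvalue 1 lie in [-lam, lam]. *)
Definition two_sided_expander (R : realType) (n : nat) (M : 'M[R]_n) (lam : R)
  : Prop :=
  exists2 q : {poly R}, char_poly M = ('X - 1%:P) * q &
    forall x : R, root q x -> - lam <= x <= lam.

Definition local_spectral_expander (V : finType) (R : realType)
  (X : {set {set V}}) (d : nat) (p : {set V} -> R) (lam : nat -> R) : Prop :=
  forall (i : nat) (t : {set V}), (i.+2 <= d)%N -> t \in X -> #|t| = i ->
    two_sided_expander (link_walk X d p t) (lam i).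

Definition kdeg (V : finType) (X : {set {set V}}) (k : nat) : nat :=
  \max_(v : V | [set v] \in X) #|[set s in X | (#|s| == k) && (v \in s)]|.

(* Main.v *)
Require Import Defs.
From HB Require Import structures.
From mathcomp Require Import all_boot all_order all_algebra.
From mathcomp Require Import reals complex lra.
Import Order.TTheory GRing.Theory Num.Theory.
Local Open Scope ring_scope.
Lemma eig_real (C : numClosedFieldType) n (a : 'I_n -> 'I_n -> C) (dg : 'I_n -> C) z
  (v : 'rV[C]_n) :
  (forall i j, a i j = a j i) -> (forall i j, a i j \is Num.real) ->
  (forall i, 0 <= dg i) -> (forall i j, dg i = 0 -> a i j = 0) ->
  v != 0 -> v *m (\matrix_(i,j) (a i j / dg i)) = z *: v -> z \is Num.real.
Proof.
move=> asym areal dg0 dga vn0 ev.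
have evj j : \sum_i (v 0 i / dg i) * a i j = z * v 0 j.
  have := congr1 (fun m : 'M_(1,n) => m 0 j) ev; rewrite !mxE => <-.
  by apply: eq_bigr => i _; rewrite mxE mulrA mulrAC.
set w := fun i => v 0 i / dg i.
set H := \sum_j (\sum_i w i * a i j) * (w j)^*.
set S := \sum_j v 0 j * (w j)^*.
have HS : H = z * S.
  by rewrite /S mulr_sumr; apply: eq_bigr => j _; rewrite evj mulrA.
have Hreal : H \is Num.real.
  apply/CrealP; rewrite /H rmorph_sum /=.
  under eq_bigr => j _ do rewrite rmorphM rmorph_sum /= conjCK mulr_suml.
  rewrite exchange_big /=; apply: eq_bigr => i _; rewrite mulr_suml.
  apply: eq_bigr => j _; rewrite rmorphM /= (conj_Creal (areal _ _)) asym.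
  by rewrite mulrAC [RHS]mulrC -mulrA.
have Sterm j : v 0 j * (w j)^* = v 0 j * (v 0 j)^* * (dg j)^-1.
  have dr : (dg j)^-1 \is Num.real by rewrite rpredV ger0_real.
  by rewrite /w rmorphM /= (conj_Creal dr) mulrA.
have Sge0 j : 0 <= v 0 j * (w j)^*.
  by rewrite Sterm; apply: mulr_ge0; [exact: mul_conjC_ge0 | rewrite invr_ge0].
have [S0|Spos] := eqVneq S 0.
  case: (pickP (fun j => v 0 j != 0)) => [j vj|allz]; last first.
    by case/eqP: vn0; apply/rowP => j; rewrite mxE; have := allz j => /negbFE/eqP.
  have := @psumr_eq0P _ _ _ _ (fun j _ => Sge0 j) S0 j isT.
  rewrite Sterm => /eqP; rewrite mulf_eq0 mul_conjC_eq0 (negbTE vj) /= invr_eq0.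
  move=> /eqP dgj.
  have := evj j; rewrite big1 => [/esym/eqP|i _]; last by rewrite asym dga // mulr0.
  by rewrite mulf_eq0 (negbTE vj) orbF => /eqP ->; rewrite real0.
have -> : z = H / S by rewrite HS mulfK.
by rewrite rpredM // rpredV ger0_real // sumr_ge0.
Qed.

Lemma spec_bound (R : realType) n (a : 'I_n -> 'I_n -> R) (dg : 'I_n -> R) lam :
  (forall i j, a i j = a j i) -> (forall i, a i i = 0) ->
  (forall i, 0 <= dg i) -> (forall i j, dg i = 0 -> a i j = 0) ->
  two_sided_expander (\matrix_(i,j) (a i j / dg i)) lam -> 1 <= (n.-1)%:R * lam.
Proof.
move=> asym adiag dg0 dga [q hq hroots].
set M := \matrix_(i,j) (a i j / dg i) in hq.
have qmon : q \is monic.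
  by have := char_poly_monic M; rewrite hq monicMl // monicXsubC.
have sz : size q = n.
  have := size_char_poly M; rewrite hq size_monicM ?monicXsubC ?monic_neq0 //.
  by rewrite size_XsubC => -[].
have tr0 : \tr M = 0.
  by rewrite /mxtrace big1 // => i _; rewrite mxE adiag mul0r.
case: n => [|m] in a dg asym adiag dg0 dga M hq sz tr0 *.
  by move: (monic_neq0 qmon); rewrite -size_poly_eq0 sz.
have := char_poly_trace M isT; rewrite tr0 oppr0 hq /=.
rewrite mulrBl polyC1 mul1r coefB coefXM.
have -> : q`_m = 1 by rewrite -(monicP qmon) lead_coefE sz.
case: m => [|m] in a dg asym adiag dg0 dga M hq sz tr0 *.
  by move/eqP; rewrite /= sub0r oppr_eq0 oner_eq0.
move=> /= /eqP; rewrite subr_eq0 => /eqP qm.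

set qc := map_poly (real_complex R) q.
have [r hr] := closed_field_poly_normal qc.
have lqc : lead_coef qc = 1 by apply/monicP; rewrite map_monic.
rewrite lqc scale1r in hr.
have rreal z : z \in r -> z \is Num.real.
  move=> zr; have rootz : root qc z by rewrite hr root_prod_XsubC.
  have : root (char_poly (map_mx (real_complex R) M)) z.
    by rewrite -map_char_poly hq rmorphM /= rootM rootz orbT.
rewrite -eigenvalue_root_char => /eigenvalueP [v ev vn0].
  have MC : map_mx (real_complex R) M = \matrix_(i,j) ((real_complex R) (a i j) / (real_complex R) (dg i)).
    by apply/matrixP => i j; rewrite !mxE rmorphM /= fmorphV.
  rewrite MC in ev.
  apply: (@eig_real _ _ (fun i j => (real_complex R) (a i j)) (fun i => (real_complex R) (dg i)) _ _ _ _ _ _ vn0 ev).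
  - by move=> i j; rewrite asym.
  - by move=> i j; apply/complex_realP; exists (a i j).
  - by move=> i; rewrite ler0c.
  - move=> i j /eqP; rewrite -(rmorph0 (real_complex R)) => /eqP/complexI/dga ->.
    exact: rmorph0.
set s := map (@complex.Re R) r.
have hs : q = \prod_(x <- s) ('X - x%:P).
  apply: (@map_poly_inj _ _ (real_complex R)); rewrite map_prod_XsubC big_map /= -/qc hr.
  apply: eq_big_seq => z zr; congr (_ - _%:P).
  by rewrite (RRe_real (rreal z zr)).
have szs : size s = m.+1 by have := sz; rewrite hs size_prod_XsubC => -[].
have sum1 : - \sum_(x <- s) x = 1.
  by rewrite -coefPn_prod_XsubC ?szs //= -hs.
have lb x : x \in s -> - lam <= x.
  move=> xs; have /hroots /andP[] // : root q x by rewrite hs root_prod_XsubC.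
have : 0 <= \sum_(x <- s) (x + lam).
  by rewrite big_seq_cond; apply: sumr_ge0 => x /andP[xs _]; rewrite -lerBlDr sub0r lb.
rewrite big_split /= big_const_seq count_predT szs iter_addr_0.
move: sum1; set S := \sum_(x <- s) x => sum1 h.
rewrite -mulr_natr in h; lra.
Qed.

Lemma link_bound (V : finType) (R : realType) (X : {set {set V}}) d (p : {set V} -> R) (lam : nat -> R) t i :
  full_support_distr X d p -> local_spectral_expander X d p lam ->
  (i.+2 <= d)%N -> t \in X -> #|t| = i -> 0 < lam i ->
  (lam i)^-1 <= #|link_verts X t|%:R.
Proof.
move=> [ppos _] hL hd tX ti lpos.
have adj0 u w : 0 <= link_adj X d p t u w.
  rewrite /link_adj; case: eqP => _ //; rewrite /face_weight.
  by apply: sumr_ge0 => f /andP[fX /andP[/eqP fd _]]; apply/ltW/ppos.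
have := hL i t hd tX ti; rewrite /link_walk => hE.
have h1 : 1 <= (#|link_verts X t|.-1)%:R * lam i.
  apply: (@spec_bound R _ (fun a b => link_adj X d p t (enum_val a) (enum_val b))
    (fun a => link_deg X d p t (enum_val a)) (lam i) _ _ _ _ hE).
  - by move=> a b; rewrite /link_adj eq_sym (setUC [set enum_val a]); case: eqP.
  - by move=> a; rewrite /link_adj eqxx.
  - by move=> a; apply: sumr_ge0 => w _; apply: adj0.
  - move=> a b h0.
    exact: (psumr_eq0P (fun w _ => adj0 _ w) h0 (enum_valP b)).
apply: (@le_trans _ _ (#|link_verts X t|.-1)%:R); last by rewrite ler_nat leq_pred.
by rewrite -(ler_pM2r lpos) mulVf ?gt_eqF.
Qed.

Lemma dcount (S U : finType) (P : S -> U -> bool) :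
  (\sum_s #|[set u | P s u]| = \sum_u #|[set s | P s u]|)%N.
Proof.
under eq_bigr do rewrite -sum1dep_card big_mkcond.
under [RHS]eq_bigr do rewrite -sum1dep_card big_mkcond.
exact: exchange_big.
Qed.

Local Notation Fv X v j := [set s in X | (#|s| == j) && (v \in s)].

Lemma count_step (V : finType) (X : {set {set V}}) (v : V) j :
  is_complex X ->
  (j * #|Fv X v j.+1| = \sum_(s in Fv X v j) #|link_verts X s|)%N.
Proof.
move=> hX.
have -> : (\sum_(s in Fv X v j) #|link_verts X s| =
    \sum_s #|[set u | (s \in Fv X v j) && (u \in link_verts X s)]|)%N.
  rewrite big_mkcond; apply: eq_bigr => s _; case: ifP => sF.
    by apply: eq_card => u; rewrite !inE.
  by apply/esym/eqP; rewrite cards_eq0; apply/eqP/setP => u; rewrite !inE.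
have -> : (j * #|Fv X v j.+1| =
    \sum_s #|[set u | (s \in Fv X v j.+1) && (u \in s :\ v)]|)%N.
  rewrite mulnC -sum_nat_const big_mkcond; apply: eq_bigr => s _.
  case: ifP => sF.
    have := sF; rewrite !inE => /andP[_ /andP[/eqP ss vs]].
    have := cardsD1 v s; rewrite vs ss add1n => -[] ->.
    by apply: eq_card => u; rewrite !inE.
  by apply/esym/eqP; rewrite cards_eq0; apply/eqP/setP => u; rewrite !inE.
rewrite dcount [RHS]dcount; apply: eq_bigr => u _.
set B := [set s | _ && _]; set A := [set s | _ && _].
have -> : B = (fun s => u |: s) @: A.
  apply/setP => s'; rewrite /link_verts !inE; apply/idP/imsetP.
    move=> /andP[/andP[s'X /andP[/eqP s's vs']] /andP[uv us']].
    exists (s' :\ u); last by rewrite setD1K.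
    rewrite !inE eqxx /= setD1K // s'X andbT.
    rewrite (hX _ _ s'X (subsetDl _ _)) (eq_sym v u) uv vs' /=.
    by have := cardsD1 u s'; rewrite us' s's add1n andbT => -[] ->.
  move=> [s]; rewrite !inE => /andP[/andP[sX /andP[/eqP ss vs]] /andP[us usX]] ->.
  rewrite usX cardsU1 us ss eqxx setU1r //= setU11 andbT.
  by apply: contraNneq us => ->.
rewrite card_in_imset // => s1 s2; rewrite /link_verts !inE.
move=> /andP[_ /andP[us1 _]] /andP[_ /andP[us2 _]] e.
by rewrite -(setU1K us1) e setU1K.
Qed.

Theorem mainTheorem15 (V : finType) (R : realType) (X : {set {set V}})
  (d : nat) (p : {set V} -> R) (lam : nat -> R) :
  is_complex X -> d_uniform X d -> full_support_distr X d p ->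
  local_spectral_expander X d p lam ->
  (forall i, (i.+2 <= d)%N -> 0 < lam i) ->
  forall k : nat, (1 <= k)%N -> (k < d)%N ->
    (kdeg X k)%:R >= ((k.-1)`!%:R)^-1 * \prod_(1 <= i < k) (lam i)^-1.
Proof.
move=> hX _ hfs hL hlam k k1 kd.
have [f fX fd] : exists2 f, f \in X & #|f| = d.
  case: (pickP [pred f | (f \in X) && (#|f| == d)]) => [f /andP[fX /eqP fd]|none].
    by exists f.
  case: hfs => _ hs; rewrite big_pred0 // in hs.
  by move/eqP: hs; rewrite eq_sym oner_eq0.
have [v vf] : exists v, v \in f.
  by apply/set0Pn; rewrite -card_gt0 fd; apply: leq_ltn_trans kd.
have vX : [set v] \in X by apply: hX fX _; rewrite sub1set.
have claim i : (i.+1 <= k)%N ->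
    (i`!%:R)^-1 * \prod_(1 <= l < i.+1) (lam l)^-1 <= #|Fv X v i.+1|%:R.
  elim: i => [_ | i IH hi].
    rewrite big_geq // fact0 invr1 mul1r ler1n card_gt0; apply/set0Pn.
    by exists [set v]; rewrite !inE vX cards1 !eqxx.
  have IH' := IH (ltnW hi).
  have lb : #|Fv X v i.+1|%:R * (lam i.+1)^-1 <= (i.+1 * #|Fv X v i.+2|)%:R.
    rewrite count_step // natr_sum.
    apply: (@le_trans _ _ (\sum_(s in Fv X v i.+1) (lam i.+1)^-1)).
      by rewrite sumr_const mulr_natl.
    apply: ler_sum => s; rewrite !inE => /andP[sX /andP[/eqP ss _]].
    apply: (@link_bound _ _ _ _ _ _ _ _ hfs hL _ sX ss); last apply: hlam.
      exact: (leq_ltn_trans hi kd).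
    exact: (leq_ltn_trans hi kd).
  rewrite big_nat_recr //= factS natrM invfM.
  have e : (i.+1%:R)^-1 * (i`!%:R)^-1 * (\prod_(1 <= l < i.+1) (lam l)^-1 * (lam i.+1)^-1)
     = (i.+1%:R)^-1 * (((i`!%:R)^-1 * \prod_(1 <= l < i.+1) (lam l)^-1) * (lam i.+1)^-1).
    by rewrite !mulrA.
  rewrite e; have lp : 0 < lam i.+1.
    by apply: hlam; exact: (leq_ltn_trans hi kd).
  apply: (le_trans (ler_wpM2l _ (ler_wpM2r _ IH'))).
  - by rewrite invr_ge0.
  - by rewrite invr_ge0 ltW.
  apply: (le_trans (ler_wpM2l _ lb)); first by rewrite invr_ge0.
  by rewrite natrM mulKf // pnatr_eq0.
have := claim k.-1; rewrite prednK // => /(_ (leqnn k)) H.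
apply: (le_trans H); rewrite ler_nat /kdeg.
exact: (leq_bigmax_cond (F := fun v => #|[set s in X | (#|s| == k) && (v \in s)]|) v vX).
Qed.
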